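(* Let $G$ be a graph, let $R\subseteq V(G)$ be such that $G[R]$ is isomorphic to $F$, and let $C\subseteq V(G)\setminus R$ be a clique in $G$ with $m$ vertices. Then one can admissibly remove from $G$ a subset of $C\cup R$ such that the remaining vertices of $C\cup R$ form a clique with at most $\max(m-1,2)$ vertices.
   Context: $F$ denotes the disjoint union of two vertex-disjoint copies of the complete bipartite graph $K_{5,5}$ (so $F$ has $20$ vertices). Removing a set $T$ of vertices from a graph $G$ is a simple admissible removal if $T$ is an independent set in $G$ and the number of edges between $T$ and $V(G)\setminus T$ is even. Removing a (not necessarily independent) set of vertices is admissible if it can be realised by a sequence of simple admissible removals, each performed in the graph remaining after the previous ones. *)

(* Defs.v *)
From mathcomp Require Import all_boot.
Set Implicit Arguments. Unset Strict Implicit. Unset Printing Implicit Defensive.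

Definition simple_graph (T : finType) (e : rel T) : Prop :=
  symmetric e /\ irreflexive e.

Definition independent (T : finType) (e : rel T) (X : {set T}) : Prop :=
  forall x y, x \in X -> y \in X -> ~~ e x y.

Definition clique (T : finType) (e : rel T) (X : {set T}) : Prop :=
  forall x y, x \in X -> y \in X -> x != y -> e x y.

(* number of edges between X and W \ X (X independent, so each such edge
   has exactly one endpoint in X) *)
Definition cut_edges (T : finType) (e : rel T) (W X : {set T}) : nat :=
  \sum_(x in X) #|[set y in W :\: X | e x y]|.

Definition simple_adm (T : finType) (e : rel T) (W X : {set T}) : Prop :=
  X \subset W /\ independent e X /\ ~~ odd (cut_edges e W X).

Inductive admissible (T : finType) (e : rel T) : {set T} -> {set T} -> Prop :=
| adm_nil W : admissible e W set0
| adm_step W X S : simple_adm e W X -> admissible e (W :\: X) S ->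
    admissible e W (X :|: S).

(* The graph F: two disjoint copies of K_{5,5}.
   A vertex is (copy, (side, index)). *)
Definition Fvert := ('I_2 * ('I_2 * 'I_5))%type.
Definition Fedge : rel Fvert :=
  fun u v => (u.1 == v.1) && (u.2.1 != v.2.1).

Definition induced_iso_F (T : finType) (e : rel T) (R : {set T}) : Prop :=
  exists f : Fvert -> T,
    [/\ injective f, f @: [set: Fvert] = R &
        forall u v, e (f u) (f v) = Fedge u v].

(* Main.v *)
Require Import Defs.
From mathcomp Require Import all_boot zify.
Set Implicit Arguments. Unset Strict Implicit. Unset Printing Implicit Defensive.

Definition deg (T : finType) (e : rel T) (W : {set T}) (v : T) : nat :=
  #|[set y in W | e v y]|.

Lemma adm_trans (T : finType) (e : rel T) W S1 S2 :
  admissible e W S1 -> admissible e (W :\: S1) S2 -> admissible e W (S1 :|: S2).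
Proof.
elim=> [W0|W0 X S hX hS IH] h2; first by rewrite set0U; rewrite setD0 in h2.
rewrite -setUA; apply: adm_step hX _; apply: IH; by rewrite setDDl.
Qed.

Lemma cut_indep (T : finType) (e : rel T) W X :
  independent e X ->
  cut_edges e W X = \sum_(x in X) deg e W x.
Proof.
move=> hI; apply: eq_bigr => x hx; rewrite /deg; apply: eq_card => y; rewrite !inE.
case: (boolP (y \in X)) => hy //=.
by rewrite (negbTE (hI _ _ hx hy)) andbF.
Qed.

Lemma deg_split (T : finType) (e : rel T) W X w :
  deg e W w = deg e (W :\: X) w + #|[set y in W :&: X | e w y]|.
Proof.
rewrite /deg -(cardsID X [set y in W | e w y]) addnC; congr (_ + _); apply: eq_card => y;
rewrite !inE; case: (y \in X); case: (y \in W); rewrite /= ?andbF ?andbT //.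
Qed.

Lemma deg_rm1 (T : finType) (e : rel T) (W : {set T}) (v w : T) : v \in W ->
  odd (deg e (W :\: [set v]) w) = odd (deg e W w) (+) e w v.
Proof.
move=> hv; rewrite (deg_split e W [set v] w).
have hc : #|[set y in W :&: [set v] | e w y]| = e w v.
  case: (boolP (e w v)) => h.
    rewrite (_ : [set y in W :&: [set v] | e w y] = [set v]) ?cards1 //.
    apply/setP=> y; rewrite !inE; case: eqP => [->|_]; by rewrite ?hv ?h ?andbF.
  rewrite (_ : [set y in W :&: [set v] | e w y] = set0) ?cards0 //.
  apply/setP=> y; rewrite !inE; case: eqP => [->|_]; by rewrite ?hv ?(negbTE h) ?andbF.
by rewrite hc oddD oddb addbK.
Qed.

Lemma deg_rm2 (T : finType) (e : rel T) (W : {set T}) (u v w : T) : u \in W -> v \in W -> u != v ->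
  odd (deg e (W :\: [set u; v]) w) = odd (deg e W w) (+) e w u (+) e w v.
Proof.
move=> hu hv huv.
have -> : W :\: [set u; v] = (W :\: [set u]) :\: [set v].
  by rewrite setDDl setUC.
rewrite deg_rm1 ?deg_rm1 //; last by rewrite !inE hv eq_sym huv.
Qed.

Lemma adm1 (T : finType) (e : rel T) (W : {set T}) v :
  irreflexive e -> v \in W -> ~~ odd (deg e W v) -> simple_adm e W [set v].
Proof.
move=> irr hv hd; split; first by rewrite sub1set.
  split; first by move=> x y; rewrite !inE => /eqP-> /eqP->; rewrite irr.
rewrite cut_indep; first by rewrite big_set1.
by move=> x y; rewrite !inE => /eqP-> /eqP->; rewrite irr.
Qed.

Lemma adm2 (T : finType) (e : rel T) (W : {set T}) u v :
  symmetric e -> irreflexive e -> u \in W -> v \in W -> u != v -> ~~ e u v ->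
  odd (deg e W u) -> odd (deg e W v) -> simple_adm e W [set u; v].
Proof.
move=> sym irr hu hv huv he du dv.
have hI : independent e [set u; v].
  move=> x y; rewrite !inE => /orP[] /eqP-> /orP[] /eqP->; by rewrite ?irr // sym.
split; first by apply/subsetP=> x; rewrite !inE => /orP[] /eqP->.
split=> //; rewrite cut_indep // big_setU1 /=; last by rewrite inE.
by rewrite big_set1 oddD du dv.
Qed.

Definition reach (T : finType) (e : rel T) (W W' : {set T}) :=
  exists S, admissible e W S /\ W' = W :\: S.

Lemma reach_refl (T : finType) (e : rel T) W : reach e W W.
Proof. by exists set0; split; [constructor | rewrite setD0]. Qed.

Lemma reach_trans (T : finType) (e : rel T) W1 W2 W3 :
  reach e W1 W2 -> reach e W2 W3 -> reach e W1 W3.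
Proof.
case=> S1 [h1 ->] [S2 [h2 ->]]; exists (S1 :|: S2); split; first exact: adm_trans.
by rewrite setDDl.
Qed.

Lemma reach1 (T : finType) (e : rel T) (W : {set T}) v :
  irreflexive e -> v \in W -> ~~ odd (deg e W v) -> reach e W (W :\: [set v]).
Proof.
move=> irr hv hd; exists [set v]; split=> //.
rewrite -[[set v]]setU0; apply: adm_step (adm1 irr hv hd) _; constructor.
Qed.

Lemma reach2 (T : finType) (e : rel T) (W : {set T}) u v :
  symmetric e -> irreflexive e -> u \in W -> v \in W -> u != v -> ~~ e u v ->
  odd (deg e W u) -> odd (deg e W v) -> reach e W (W :\: [set u; v]).
Proof.
move=> sym irr hu hv huv he du dv; exists [set u; v]; split=> //.
rewrite -[[set u; v]]setU0; apply: adm_step (adm2 sym irr hu hv huv he du dv) _; constructor.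
Qed.

Lemma reach_sub (T : finType) (e : rel T) W W' : reach e W W' -> W' \subset W.
Proof. by case=> S [_ ->]; apply: subsetDl. Qed.

Lemma greedy (T : finType) (e : rel T) (S W : {set T}) :
  symmetric e -> irreflexive e ->
  exists W', [/\ reach e W W', W :\: W' \subset S & clique e (S :&: W')].
Proof.
move=> sym irr.
move: {2}#|S :&: W| (leqnn #|S :&: W|) => n; elim: n W => [|n IH] W hn.
  exists W; split; [exact: reach_refl | by rewrite setDv sub0set |].
  move=> x y hx; move: hn; rewrite leqn0 => /eqP/cards0_eq hS.
  by rewrite hS inE in hx.
case: (boolP [exists v in S :&: W, ~~ odd (deg e W v)]).
  case/existsP=> v /andP[hvSW hd].
  have hv : v \in W by move: hvSW; rewrite inE => /andP[].
  have hlt : #|S :&: (W :\: [set v])| <= n.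
    rewrite -ltnS; apply: leq_trans hn; apply: proper_card; apply/properP; split.
      by apply: setIS; apply: subsetDl.
    by exists v; rewrite // !inE eqxx /= andbF.
  have [W' [h1 h2 h3]] := IH _ hlt.
  exists W'; split=> //; first exact: reach_trans (reach1 irr hv hd) h1.
  apply/subsetP=> x; rewrite inE => /andP[hxW' hxW].
  case: (x =P v) => [-> |hxv]; first by move: hvSW; rewrite inE => /andP[].
  by apply: (subsetP h2); rewrite !inE hxW hxW' andbT; apply/eqP.
case: (boolP [exists u in S :&: W, exists v in S :&: W, (u != v) && ~~ e u v]).
  case/existsP=> u /andP[huSW /existsP[v /andP[hvSW /andP[huv he]]]] hno.
  have hu : u \in W by move: huSW; rewrite inE => /andP[].
  have hv : v \in W by move: hvSW; rewrite inE => /andP[].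
  have odd1 : forall x, x \in S :&: W -> odd (deg e W x).
    move=> x hx; apply: contraR hno => hx'; apply/existsP; exists x; by rewrite hx hx'.
  have hlt : #|S :&: (W :\: [set u; v])| <= n.
    rewrite -ltnS; apply: leq_trans hn; apply: proper_card; apply/properP; split.
      by apply: setIS; apply: subsetDl.
    by exists u; rewrite // !inE eqxx /= andbF.
  have [W' [h1 h2 h3]] := IH _ hlt.
  exists W'; split=> //.
    exact: reach_trans (reach2 sym irr hu hv huv he (odd1 _ huSW) (odd1 _ hvSW)) h1.
  apply/subsetP=> x; rewrite inE => /andP[hxW' hxW].
  case: (boolP (x \in [set u; v])).
    by rewrite !inE => /orP[] /eqP->; [move: huSW | move: hvSW]; rewrite inE => /andP[].
  by move=> hx; apply: (subsetP h2); rewrite !inE in hx; rewrite !inE hxW hxW' andbT hx.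
move=> hno _; exists W; split; [exact: reach_refl | by rewrite setDv sub0set |].
move=> x y hx hy hxy; apply: contraR hno => hxy'; apply/existsP; exists x.
rewrite hx; apply/existsP; exists y; by rewrite hy hxy hxy'.
Qed.

Fixpoint runp (plan : seq (nat * nat)) (adj : nat -> nat -> bool) (rem par : nat -> bool) : bool :=
  match plan with
  | [::] => ~~ rem 4
  | (i, k) :: pl =>
    if i == k then
      [&& i < 5, rem i, ~~ par i &
          runp pl adj (fun j => rem j && (j != i)) (fun j => par j (+) adj j i)]
    else
      [&& i < k, k < 5, rem i, rem k, par i, par k, ~~ adj i k &
          runp pl adj (fun j => [&& rem j, j != i & j != k])
                      (fun j => par j (+) adj j i (+) adj j k)]
  end.

Definition gset (T : finType) (vv : nat -> T) : {set T} :=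
  [set x | [exists i : 'I_5, vv i == x]].

Lemma gsetP (T : finType) (vv : nat -> T) i : i < 5 -> vv i \in gset vv.
Proof. by move=> hi; rewrite inE; apply/existsP; exists (Ordinal hi). Qed.

Lemma inj_neq (T : finType) (vv : nat -> T) :
  (forall i j, i < 5 -> j < 5 -> vv i = vv j -> i = j) ->
  forall j a, j < 5 -> a < 5 -> (vv j != vv a) = (j != a).
Proof.
move=> hinj j a hj ha; apply/idP/idP; apply: contra => /eqP h; apply/eqP.
  by rewrite h.
by apply: hinj.
Qed.

Lemma win_sound (T : finType) (e : rel T) (vv : nat -> T) (adj : nat -> nat -> bool) plan :
  symmetric e -> irreflexive e ->
  (forall i j, i < 5 -> j < 5 -> adj i j = e (vv i) (vv j)) ->
  (forall i j, i < 5 -> j < 5 -> vv i = vv j -> i = j) ->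
  forall rem par (W : {set T}),
  (forall i, i < 5 -> (vv i \in W) = rem i) ->
  (forall i, i < 5 -> rem i -> odd (deg e W (vv i)) = par i) ->
  runp plan adj rem par ->
  exists W', [/\ reach e W W', W :\: W' \subset gset vv & vv 4 \notin W'].
Proof.
move=> sym irr hadj hinj.
have base : forall rem (W : {set T}), (forall i, i < 5 -> (vv i \in W) = rem i) ->
    ~~ rem 4 -> exists W', [/\ reach e W W', W :\: W' \subset gset vv & vv 4 \notin W'].
  move=> rem W hrem h4; exists W; split; first exact: reach_refl.
    by rewrite setDv sub0set.
  by rewrite hrem.
elim: plan => [|[i k] pl IH] rem par W hrem hpar.
  by apply: base.
rewrite /=; case: ifP => [_|hik0].
  case/and4P=> hi ri pi hw.
  have hvi : vv i \in W by rewrite hrem.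
  have hd : ~~ odd (deg e W (vv i)) by rewrite hpar.
  have hr1 : forall j, j < 5 -> (vv j \in W :\: [set vv i]) = rem j && (j != i).
    move=> j hj; rewrite !inE hrem // (inj_neq hinj) // andbC //.
  have hp1 : forall j, j < 5 -> rem j && (j != i) ->
      odd (deg e (W :\: [set vv i]) (vv j)) = par j (+) adj j i.
    move=> j hj /andP[rj hji]; rewrite deg_rm1 // hpar // hadj //.
  have [W' [h1 h2 h3]] := IH _ _ _ hr1 hp1 hw.
  exists W'; split=> //; first exact: reach_trans (reach1 irr hvi hd) h1.
  apply/subsetP=> x; rewrite inE => /andP[hxW' hxW].
  case: (x =P vv i) => [->|hx]; first exact: gsetP.
  by apply: (subsetP h2); rewrite !inE hxW hxW' andbT; apply/eqP.
case/and5P=> hik hk ri rk /and4P[pi pk hnadj hw].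
have hi : i < 5 by apply: ltn_trans hk.
have hvi : vv i \in W by rewrite hrem.
have hvk : vv k \in W by rewrite hrem.
have hne : vv i != vv k.
  by apply/eqP => /hinj h; move: hik; rewrite h // ltnn.
have hr1 : forall j, j < 5 -> (vv j \in W :\: [set vv i; vv k]) = [&& rem j, j != i & j != k].
  move=> j hj; rewrite !inE hrem // negb_or !(inj_neq hinj) //.
  by case: (rem j); case: (j != i); case: (j != k).
have hp1 : forall j, j < 5 -> [&& rem j, j != i & j != k] ->
    odd (deg e (W :\: [set vv i; vv k]) (vv j)) = par j (+) adj j i (+) adj j k.
  move=> j hj /and3P[rj hji hjk]; rewrite deg_rm2 // hpar // !hadj //.
have [W' [h1 h2 h3]] := IH _ _ _ hr1 hp1 hw.
exists W'; split=> //.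
  apply: reach_trans (reach2 sym irr hvi hvk hne _ _ _) h1.
  + by rewrite -hadj.
  + by rewrite hpar.
  + by rewrite hpar.
apply/subsetP=> x; rewrite inE => /andP[hxW' hxW].
case: (x =P vv i) => [->|hx]; first exact: gsetP.
case: (x =P vv k) => [->|hx']; first exact: gsetP.
by apply: (subsetP h2); rewrite !inE hxW hxW' /= andbT negb_or; apply/andP; split; apply/eqP.
Qed.

Definition gadj (a : nat -> bool) (i j : nat) : bool :=
  if i == 4 then (if j == 4 then false else a j)
  else if j == 4 then a i
  else [|| (i == 0) && (j == 1), (i == 1) && (j == 0), (i == 2) && (j == 3) | (i == 3) && (j == 2)].
Definition ptable : seq (seq (nat * nat)) := [::
[::(0,0); (2,2); (4,4)];
[::(0,0); (2,2); (1,4)];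
[::(0,0); (2,2); (4,4)];
[::(0,0); (2,2); (1,3); (4,4)];
[::(0,0); (2,2); (1,4)];
[::(0,0); (2,2); (4,4)];
[::(0,0); (2,2); (1,3); (4,4)];
[::(0,0); (2,2); (4,4)];
[::(0,0); (2,2); (4,4)];
[::(0,0); (2,2); (1,3); (4,4)];
[::(0,0); (2,2); (4,4)];
[::(0,0); (3,3); (4,4)];
[::(0,0); (2,2); (1,3); (4,4)];
[::(0,0); (2,2); (4,4)];
[::(0,0); (4,4)];
[::(0,0); (2,2); (4,4)];
[::(1,1); (0,0); (2,2); (4,4)];
[::(1,1); (0,0); (2,2); (3,4)];
[::(1,1); (0,0); (2,2); (3,4)];
[::(1,1); (0,0); (2,2); (4,4)];
[::(1,1); (0,0); (2,2); (3,4)];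
[::(1,1); (0,0); (2,2); (4,4)];
[::(1,1); (0,0); (2,2); (4,4)];
[::(1,1); (0,0); (2,2); (3,4)];
[::(1,1); (0,0); (2,2); (4,4)];
[::(1,1); (0,0); (3,3); (4,4)];
[::(1,1); (0,0); (3,3); (4,4)];
[::(1,1); (0,0); (2,2); (4,4)];
[::(1,1); (0,0); (4,4)];
[::(1,1); (0,0); (2,2); (4,4)];
[::(1,1); (0,0); (2,2); (4,4)];
[::(1,1); (0,0); (4,4)];
[::(0,0); (1,1); (2,2); (4,4)];
[::(0,0); (1,1); (2,2); (3,4)];
[::(0,0); (1,1); (2,2); (3,4)];
[::(0,0); (1,1); (2,2); (4,4)];
[::(0,0); (1,1); (2,2); (3,4)];
[::(0,0); (1,1); (2,2); (4,4)];
[::(0,0); (1,1); (2,2); (4,4)];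
[::(0,0); (1,1); (2,2); (3,4)];
[::(0,0); (1,1); (2,2); (4,4)];
[::(0,0); (1,1); (3,3); (4,4)];
[::(0,0); (1,1); (3,3); (4,4)];
[::(0,0); (1,1); (2,2); (4,4)];
[::(0,0); (1,1); (4,4)];
[::(0,0); (1,1); (2,2); (4,4)];
[::(0,0); (1,1); (2,2); (4,4)];
[::(0,0); (1,1); (4,4)];
[::(2,2); (4,4)];
[::(2,2); (4,4)];
[::(2,2); (4,4)];
[::(2,2); (4,4)];
[::(2,2); (0,4)];
[::(2,2); (0,3); (1,1); (4,4)];
[::(2,2); (0,3); (1,1); (4,4)];
[::(2,2); (0,3); (4,4)];
[::(2,2); (4,4)];
[::(2,2); (4,4)];
[::(2,2); (4,4)];
[::(2,2); (4,4)];
[::(2,2); (0,3); (1,1); (4,4)];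
[::(2,2); (1,3); (4,4)];
[::(2,2); (0,3); (4,4)];
[::(2,2); (0,3); (1,1); (4,4)];
[::(0,0); (3,3); (2,2); (4,4)];
[::(0,0); (3,3); (2,2); (1,4)];
[::(0,0); (3,3); (2,2); (4,4)];
[::(0,0); (1,2); (4,4)];
[::(0,0); (3,3); (2,2); (1,4)];
[::(0,0); (3,3); (2,2); (4,4)];
[::(0,0); (3,3); (4,4)];
[::(0,0); (3,3); (2,2); (4,4)];
[::(0,0); (3,3); (2,2); (1,4)];
[::(0,0); (3,3); (2,2); (4,4)];
[::(0,0); (4,4)];
[::(0,0); (3,3); (2,2); (4,4)];
[::(0,0); (3,3); (2,2); (4,4)];
[::(0,0); (3,3); (2,2); (1,4)];
[::(0,0); (3,3); (2,2); (4,4)];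
[::(0,0); (3,3); (4,4)];
[::(1,1); (0,0); (3,3); (2,2); (4,4)];
[::(1,1); (0,0); (2,4)];
[::(1,1); (0,0); (2,4)];
[::(1,1); (0,0); (3,3); (2,2); (4,4)];
[::(1,1); (0,0); (3,3); (4,4)];
[::(1,1); (0,0); (3,3); (2,2); (4,4)];
[::(1,1); (0,0); (3,3); (2,2); (4,4)];
[::(1,1); (0,0); (3,3); (4,4)];
[::(1,1); (0,0); (4,4)];
[::(1,1); (0,0); (3,3); (2,2); (4,4)];
[::(1,1); (0,0); (3,3); (2,2); (4,4)];
[::(1,1); (0,0); (4,4)];
[::(1,1); (0,0); (3,3); (2,2); (4,4)];
[::(1,1); (0,0); (3,3); (4,4)];
[::(1,1); (0,0); (3,3); (4,4)];
[::(1,1); (0,0); (3,3); (2,2); (4,4)];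
[::(0,0); (1,1); (3,3); (2,2); (4,4)];
[::(0,0); (1,1); (2,4)];
[::(0,0); (1,1); (2,4)];
[::(0,0); (1,1); (3,3); (2,2); (4,4)];
[::(0,0); (1,1); (3,3); (4,4)];
[::(0,0); (1,1); (3,3); (2,2); (4,4)];
[::(0,0); (1,1); (3,3); (2,2); (4,4)];
[::(0,0); (1,1); (3,3); (4,4)];
[::(0,0); (1,1); (4,4)];
[::(0,0); (1,1); (3,3); (2,2); (4,4)];
[::(0,0); (1,1); (3,3); (2,2); (4,4)];
[::(0,0); (1,1); (4,4)];
[::(0,0); (1,1); (3,3); (2,2); (4,4)];
[::(0,0); (1,1); (3,3); (4,4)];
[::(0,0); (1,1); (3,3); (4,4)];
[::(0,0); (1,1); (3,3); (2,2); (4,4)];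
[::(3,3); (2,2); (4,4)];
[::(3,3); (2,2); (4,4)];
[::(3,3); (2,2); (4,4)];
[::(3,3); (2,2); (4,4)];
[::(3,3); (2,2); (0,4)];
[::(3,3); (2,2); (1,4)];
[::(3,3); (2,2); (0,4)];
[::(3,3); (4,4)];
[::(3,3); (2,2); (0,4)];
[::(3,3); (2,2); (1,4)];
[::(3,3); (2,2); (0,4)];
[::(4,4)];
[::(3,3); (2,2); (4,4)];
[::(3,3); (2,2); (4,4)];
[::(3,3); (2,2); (4,4)];
[::(3,3); (2,2); (4,4)];
[::(0,0); (2,2); (3,3); (4,4)];
[::(0,0); (2,2); (3,3); (1,4)];
[::(0,0); (2,2); (3,3); (4,4)];
[::(0,0); (1,3); (4,4)];
[::(0,0); (2,2); (3,3); (1,4)];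
[::(0,0); (2,2); (3,3); (4,4)];
[::(0,0); (4,4)];
[::(0,0); (2,2); (3,3); (4,4)];
[::(0,0); (2,2); (3,3); (1,4)];
[::(0,0); (2,2); (3,3); (4,4)];
[::(0,0); (2,2); (4,4)];
[::(0,0); (2,2); (3,3); (4,4)];
[::(0,0); (2,2); (3,3); (4,4)];
[::(0,0); (2,2); (3,3); (1,4)];
[::(0,0); (2,2); (3,3); (4,4)];
[::(0,0); (2,2); (4,4)];
[::(1,1); (0,0); (2,2); (3,3); (4,4)];
[::(1,1); (0,0); (3,4)];
[::(1,1); (0,0); (3,4)];
[::(1,1); (0,0); (2,2); (3,3); (4,4)];
[::(1,1); (0,0); (4,4)];
[::(1,1); (0,0); (2,2); (3,3); (4,4)];
[::(1,1); (0,0); (2,2); (3,3); (4,4)];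
[::(1,1); (0,0); (4,4)];
[::(1,1); (0,0); (2,2); (4,4)];
[::(1,1); (0,0); (2,2); (3,3); (4,4)];
[::(1,1); (0,0); (2,2); (3,3); (4,4)];
[::(1,1); (0,0); (2,2); (4,4)];
[::(1,1); (0,0); (2,2); (3,3); (4,4)];
[::(1,1); (0,0); (2,2); (4,4)];
[::(1,1); (0,0); (2,2); (4,4)];
[::(1,1); (0,0); (2,2); (3,3); (4,4)];
[::(0,0); (1,1); (2,2); (3,3); (4,4)];
[::(0,0); (1,1); (3,4)];
[::(0,0); (1,1); (3,4)];
[::(0,0); (1,1); (2,2); (3,3); (4,4)];
[::(0,0); (1,1); (4,4)];
[::(0,0); (1,1); (2,2); (3,3); (4,4)];
[::(0,0); (1,1); (2,2); (3,3); (4,4)];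
[::(0,0); (1,1); (4,4)];
[::(0,0); (1,1); (2,2); (4,4)];
[::(0,0); (1,1); (2,2); (3,3); (4,4)];
[::(0,0); (1,1); (2,2); (3,3); (4,4)];
[::(0,0); (1,1); (2,2); (4,4)];
[::(0,0); (1,1); (2,2); (3,3); (4,4)];
[::(0,0); (1,1); (2,2); (4,4)];
[::(0,0); (1,1); (2,2); (4,4)];
[::(0,0); (1,1); (2,2); (3,3); (4,4)];
[::(2,2); (3,3); (4,4)];
[::(2,2); (3,3); (4,4)];
[::(2,2); (3,3); (4,4)];
[::(2,2); (3,3); (4,4)];
[::(2,2); (3,3); (0,4)];
[::(2,2); (3,3); (1,4)];
[::(2,2); (3,3); (0,4)];
[::(4,4)];
[::(2,2); (3,3); (0,4)];
[::(2,2); (3,3); (1,4)];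
[::(2,2); (3,3); (0,4)];
[::(2,2); (4,4)];
[::(2,2); (3,3); (4,4)];
[::(2,2); (3,3); (4,4)];
[::(2,2); (3,3); (4,4)];
[::(2,2); (3,3); (4,4)];
[::(0,0); (4,4)];
[::(0,0); (1,4)];
[::(0,0); (4,4)];
[::(0,0); (1,2); (3,3); (4,4)];
[::(0,0); (4,4)];
[::(0,0); (1,2); (3,3); (4,4)];
[::(0,0); (4,4)];
[::(0,0); (1,3); (4,4)];
[::(0,0); (4,4)];
[::(0,0); (1,2); (3,3); (4,4)];
[::(0,0); (4,4)];
[::(0,0); (1,2); (4,4)];
[::(0,0); (4,4)];
[::(0,0); (1,2); (4,4)];
[::(0,0); (4,4)];
[::(0,0); (1,2); (3,3); (4,4)];
[::(1,1); (0,0); (4,4)];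
[::(1,1); (0,0); (2,4)];
[::(1,1); (0,0); (2,4)];
[::(1,1); (0,0); (4,4)];
[::(1,1); (0,0); (4,4)];
[::(1,1); (0,0); (3,4)];
[::(1,1); (0,0); (3,4)];
[::(1,1); (0,0); (4,4)];
[::(1,1); (0,0); (4,4)];
[::(1,1); (0,0); (2,4)];
[::(1,1); (0,0); (2,4)];
[::(1,1); (0,0); (4,4)];
[::(1,1); (0,0); (4,4)];
[::(1,1); (4,4)];
[::(4,4)];
[::(1,1); (0,0); (4,4)];
[::(0,0); (1,1); (4,4)];
[::(0,0); (1,1); (2,4)];
[::(0,0); (1,1); (2,4)];
[::(0,0); (1,1); (4,4)];
[::(0,0); (1,1); (4,4)];
[::(0,0); (1,1); (3,4)];
[::(0,0); (1,1); (3,4)];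
[::(0,0); (1,1); (4,4)];
[::(0,0); (1,1); (4,4)];
[::(0,0); (1,1); (2,4)];
[::(0,0); (1,1); (2,4)];
[::(0,0); (1,1); (4,4)];
[::(0,0); (1,1); (4,4)];
[::(4,4)];
[::(0,0); (4,4)];
[::(0,0); (1,1); (4,4)];
[::(4,4)];
[::(4,4)];
[::(4,4)];
[::(4,4)];
[::(4,4)];
[::(4,4)];
[::(4,4)];
[::(4,4)];
[::(4,4)];
[::(4,4)];
[::(4,4)];
[::(4,4)];
[::(4,4)];
[::(4,4)];
[::(4,4)];
[::(4,4)];
[::(0,0); (2,2); (1,4)];
[::(0,0); (2,2); (4,4)];
[::(0,0); (2,2); (1,3); (4,4)];
[::(0,0); (2,2); (4,4)];
[::(0,0); (2,2); (4,4)];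
[::(0,0); (2,2); (1,4)];
[::(0,0); (2,2); (4,4)];
[::(0,0); (2,2); (1,3); (4,4)];
[::(0,0); (2,2); (1,3); (4,4)];
[::(0,0); (2,2); (4,4)];
[::(0,0); (3,3); (4,4)];
[::(0,0); (2,2); (4,4)];
[::(0,0); (2,2); (4,4)];
[::(0,0); (2,2); (1,3); (4,4)];
[::(0,0); (2,2); (4,4)];
[::(0,0); (4,4)];
[::(1,1); (0,0); (2,2); (3,4)];
[::(1,1); (0,0); (2,2); (4,4)];
[::(1,1); (0,0); (2,2); (4,4)];
[::(1,1); (0,0); (2,2); (3,4)];
[::(1,1); (0,0); (2,2); (4,4)];
[::(1,1); (0,0); (2,2); (3,4)];
[::(1,1); (0,0); (2,2); (3,4)];
[::(1,1); (0,0); (2,2); (4,4)];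
[::(1,1); (0,0); (3,3); (4,4)];
[::(1,1); (0,0); (2,2); (4,4)];
[::(1,1); (0,0); (2,2); (4,4)];
[::(1,1); (0,0); (3,3); (4,4)];
[::(1,1); (0,0); (2,2); (4,4)];
[::(1,1); (0,0); (4,4)];
[::(1,1); (0,0); (4,4)];
[::(1,1); (0,0); (2,2); (4,4)];
[::(0,0); (1,1); (2,2); (3,4)];
[::(0,0); (1,1); (2,2); (4,4)];
[::(0,0); (1,1); (2,2); (4,4)];
[::(0,0); (1,1); (2,2); (3,4)];
[::(0,0); (1,1); (2,2); (4,4)];
[::(0,0); (1,1); (2,2); (3,4)];
[::(0,0); (1,1); (2,2); (3,4)];
[::(0,0); (1,1); (2,2); (4,4)];
[::(0,0); (1,1); (3,3); (4,4)];
[::(0,0); (1,1); (2,2); (4,4)];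
[::(0,0); (1,1); (2,2); (4,4)];
[::(0,0); (1,1); (3,3); (4,4)];
[::(0,0); (1,1); (2,2); (4,4)];
[::(0,0); (1,1); (4,4)];
[::(0,0); (1,1); (4,4)];
[::(0,0); (1,1); (2,2); (4,4)];
[::(2,2); (0,4)];
[::(2,2); (0,3); (1,1); (4,4)];
[::(2,2); (0,3); (1,1); (4,4)];
[::(2,2); (0,3); (4,4)];
[::(2,2); (4,4)];
[::(2,2); (4,4)];
[::(2,2); (4,4)];
[::(2,2); (4,4)];
[::(2,2); (0,3); (1,1); (4,4)];
[::(2,2); (1,3); (4,4)];
[::(2,2); (0,3); (4,4)];
[::(2,2); (0,3); (1,1); (4,4)];
[::(2,2); (4,4)];
[::(2,2); (4,4)];
[::(2,2); (4,4)];
[::(2,2); (4,4)];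
[::(0,0); (3,3); (2,2); (1,4)];
[::(0,0); (3,3); (2,2); (4,4)];
[::(0,0); (1,2); (4,4)];
[::(0,0); (3,3); (2,2); (4,4)];
[::(0,0); (3,3); (2,2); (4,4)];
[::(0,0); (3,3); (2,2); (1,4)];
[::(0,0); (3,3); (2,2); (4,4)];
[::(0,0); (3,3); (4,4)];
[::(0,0); (3,3); (2,2); (4,4)];
[::(0,0); (3,3); (2,2); (1,4)];
[::(0,0); (3,3); (2,2); (4,4)];
[::(0,0); (4,4)];
[::(0,0); (3,3); (2,2); (1,4)];
[::(0,0); (3,3); (2,2); (4,4)];
[::(0,0); (3,3); (4,4)];
[::(0,0); (3,3); (2,2); (4,4)];
[::(1,1); (0,0); (2,4)];
[::(1,1); (0,0); (3,3); (2,2); (4,4)];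
[::(1,1); (0,0); (3,3); (2,2); (4,4)];
[::(1,1); (0,0); (2,4)];
[::(1,1); (0,0); (3,3); (2,2); (4,4)];
[::(1,1); (0,0); (3,3); (4,4)];
[::(1,1); (0,0); (3,3); (4,4)];
[::(1,1); (0,0); (3,3); (2,2); (4,4)];
[::(1,1); (0,0); (3,3); (2,2); (4,4)];
[::(1,1); (0,0); (4,4)];
[::(1,1); (0,0); (4,4)];
[::(1,1); (0,0); (3,3); (2,2); (4,4)];
[::(1,1); (0,0); (3,3); (4,4)];
[::(1,1); (0,0); (3,3); (2,2); (4,4)];
[::(1,1); (0,0); (3,3); (2,2); (4,4)];
[::(1,1); (0,0); (3,3); (4,4)];
[::(0,0); (1,1); (2,4)];
[::(0,0); (1,1); (3,3); (2,2); (4,4)];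
[::(0,0); (1,1); (3,3); (2,2); (4,4)];
[::(0,0); (1,1); (2,4)];
[::(0,0); (1,1); (3,3); (2,2); (4,4)];
[::(0,0); (1,1); (3,3); (4,4)];
[::(0,0); (1,1); (3,3); (4,4)];
[::(0,0); (1,1); (3,3); (2,2); (4,4)];
[::(0,0); (1,1); (3,3); (2,2); (4,4)];
[::(0,0); (1,1); (4,4)];
[::(0,0); (1,1); (4,4)];
[::(0,0); (1,1); (3,3); (2,2); (4,4)];
[::(0,0); (1,1); (3,3); (4,4)];
[::(0,0); (1,1); (3,3); (2,2); (4,4)];
[::(0,0); (1,1); (3,3); (2,2); (4,4)];
[::(0,0); (1,1); (3,3); (4,4)];
[::(3,3); (2,2); (0,4)];
[::(3,3); (2,2); (1,4)];
[::(3,3); (2,2); (0,4)];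
[::(0,2); (1,1); (3,4)];
[::(3,3); (2,2); (4,4)];
[::(3,3); (2,2); (4,4)];
[::(3,3); (2,2); (4,4)];
[::(3,3); (2,2); (4,4)];
[::(3,3); (2,2); (4,4)];
[::(3,3); (2,2); (4,4)];
[::(3,3); (2,2); (4,4)];
[::(3,3); (2,2); (4,4)];
[::(3,3); (2,2); (0,4)];
[::(3,3); (2,2); (1,4)];
[::(3,3); (2,2); (0,4)];
[::(3,3); (4,4)];
[::(0,0); (2,2); (3,3); (1,4)];
[::(0,0); (2,2); (3,3); (4,4)];
[::(0,0); (1,3); (4,4)];
[::(0,0); (2,2); (3,3); (4,4)];
[::(0,0); (2,2); (3,3); (4,4)];
[::(0,0); (2,2); (3,3); (1,4)];
[::(0,0); (2,2); (3,3); (4,4)];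
[::(0,0); (4,4)];
[::(0,0); (2,2); (3,3); (4,4)];
[::(0,0); (2,2); (3,3); (1,4)];
[::(0,0); (2,2); (3,3); (4,4)];
[::(0,0); (2,2); (4,4)];
[::(0,0); (2,2); (3,3); (1,4)];
[::(0,0); (2,2); (3,3); (4,4)];
[::(0,0); (2,2); (4,4)];
[::(0,0); (2,2); (3,3); (4,4)];
[::(1,1); (0,0); (3,4)];
[::(1,1); (0,0); (2,2); (3,3); (4,4)];
[::(1,1); (0,0); (2,2); (3,3); (4,4)];
[::(1,1); (0,0); (3,4)];
[::(1,1); (0,0); (2,2); (3,3); (4,4)];
[::(1,1); (0,0); (4,4)];
[::(1,1); (0,0); (4,4)];
[::(1,1); (0,0); (2,2); (3,3); (4,4)];
[::(1,1); (0,0); (2,2); (3,3); (4,4)];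
[::(1,1); (0,0); (2,2); (4,4)];
[::(1,1); (0,0); (2,2); (4,4)];
[::(1,1); (0,0); (2,2); (3,3); (4,4)];
[::(1,1); (0,0); (2,2); (4,4)];
[::(1,1); (0,0); (2,2); (3,3); (4,4)];
[::(1,1); (0,0); (2,2); (3,3); (4,4)];
[::(1,1); (0,0); (2,2); (4,4)];
[::(0,0); (1,1); (3,4)];
[::(0,0); (1,1); (2,2); (3,3); (4,4)];
[::(0,0); (1,1); (2,2); (3,3); (4,4)];
[::(0,0); (1,1); (3,4)];
[::(0,0); (1,1); (2,2); (3,3); (4,4)];
[::(0,0); (1,1); (4,4)];
[::(0,0); (1,1); (4,4)];
[::(0,0); (1,1); (2,2); (3,3); (4,4)];
[::(0,0); (1,1); (2,2); (3,3); (4,4)];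
[::(0,0); (1,1); (2,2); (4,4)];
[::(0,0); (1,1); (2,2); (4,4)];
[::(0,0); (1,1); (2,2); (3,3); (4,4)];
[::(0,0); (1,1); (2,2); (4,4)];
[::(0,0); (1,1); (2,2); (3,3); (4,4)];
[::(0,0); (1,1); (2,2); (3,3); (4,4)];
[::(0,0); (1,1); (2,2); (4,4)];
[::(2,2); (3,3); (0,4)];
[::(2,2); (3,3); (1,4)];
[::(2,2); (3,3); (0,4)];
[::(0,3); (1,1); (2,4)];
[::(2,2); (3,3); (4,4)];
[::(2,2); (3,3); (4,4)];
[::(2,2); (3,3); (4,4)];
[::(2,2); (3,3); (4,4)];
[::(2,2); (3,3); (4,4)];
[::(2,2); (3,3); (4,4)];
[::(2,2); (3,3); (4,4)];
[::(2,2); (3,3); (4,4)];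
[::(2,2); (3,3); (0,4)];
[::(2,2); (3,3); (1,4)];
[::(2,2); (3,3); (0,4)];
[::(2,2); (4,4)];
[::(0,0); (1,4)];
[::(0,0); (4,4)];
[::(0,0); (1,2); (3,3); (4,4)];
[::(0,0); (4,4)];
[::(0,0); (1,2); (3,3); (4,4)];
[::(0,0); (4,4)];
[::(0,0); (1,3); (4,4)];
[::(0,0); (4,4)];
[::(0,0); (1,2); (3,3); (4,4)];
[::(0,0); (4,4)];
[::(0,0); (1,2); (4,4)];
[::(0,0); (4,4)];
[::(0,0); (1,2); (4,4)];
[::(0,0); (4,4)];
[::(0,0); (1,2); (3,3); (4,4)];
[::(0,0); (4,4)];
[::(1,1); (0,0); (2,4)];
[::(1,1); (0,0); (4,4)];
[::(1,1); (0,0); (4,4)];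
[::(1,1); (0,0); (2,4)];
[::(1,1); (0,0); (3,4)];
[::(1,1); (0,0); (4,4)];
[::(1,1); (0,0); (4,4)];
[::(1,1); (0,0); (3,4)];
[::(1,1); (0,0); (2,4)];
[::(1,1); (0,0); (4,4)];
[::(1,1); (0,0); (4,4)];
[::(1,1); (0,0); (2,4)];
[::(0,2); (3,3); (1,4)];
[::(1,1); (0,0); (4,4)];
[::(1,1); (0,0); (4,4)];
[::(1,1); (4,4)];
[::(0,0); (1,1); (2,4)];
[::(0,0); (1,1); (4,4)];
[::(0,0); (1,1); (4,4)];
[::(0,0); (1,1); (2,4)];
[::(0,0); (1,1); (3,4)];
[::(0,0); (1,1); (4,4)];
[::(0,0); (1,1); (4,4)];
[::(0,0); (1,1); (3,4)];
[::(0,0); (1,1); (2,4)];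
[::(0,0); (1,1); (4,4)];
[::(0,0); (1,1); (4,4)];
[::(0,0); (1,1); (2,4)];
[::(1,2); (3,3); (0,4)];
[::(0,0); (1,1); (4,4)];
[::(0,0); (1,1); (4,4)];
[::(0,0); (4,4)];
[::(0,4)];
[::(0,2); (1,1); (3,3); (4,4)];
[::(0,2); (1,1); (3,3); (4,4)];
[::(0,2); (3,3); (4,4)];
[::(0,2); (1,1); (3,3); (4,4)];
[::(0,3); (1,1); (4,4)];
[::(0,2); (3,3); (4,4)];
[::(0,2); (1,1); (3,3); (4,4)];
[::(0,2); (1,1); (3,3); (4,4)];
[::(0,2); (1,1); (4,4)];
[::(0,2); (1,1); (4,4)];
[::(0,2); (1,1); (3,3); (4,4)];
[::(0,2); (1,1); (4,4)];
[::(0,2); (1,1); (3,3); (4,4)];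
[::(0,2); (1,1); (3,3); (4,4)];
[::(0,2); (1,1); (4,4)]].

Definition code (bs : seq bool) : nat := foldr (fun (b : bool) (n : nat) => (b : nat) + n.*2) 0 bs.

Lemma gadget_win (a0 a1 a2 a3 p0 p1 p2 p3 p4 : bool) :
  runp (nth [::] ptable (code [:: a0; a1; a2; a3; p0; p1; p2; p3; p4]))
       (gadj (fun i => nth false [:: a0; a1; a2; a3] i)) (fun _ => true)
       (fun i => nth false [:: p0; p1; p2; p3; p4] i).
Proof.
by case: a0; case: a1; case: a2; case: a3; case: p0; case: p1; case: p2; case: p3; case: p4; vm_compute.
Qed.

Lemma gadget (T : finType) (e : rel T) (x1 y1 x2 y2 c : T) (W : {set T}) :
  symmetric e -> irreflexive e ->
  e x1 y1 -> e x2 y2 -> ~~ e x1 x2 -> ~~ e x1 y2 -> ~~ e y1 x2 -> ~~ e y1 y2 ->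
  uniq [:: x1; y1; x2; y2; c] ->
  [/\ x1 \in W, y1 \in W, x2 \in W, y2 \in W & c \in W] ->
  exists W', [/\ reach e W W', W :\: W' \subset [set x1; y1; x2; y2; c] & c \notin W'].
Proof.
move=> sym irr E1 E2 N1 N2 N3 N4 hu [w1 w2 w3 w4 w5].
pose vv := fun i => nth c [:: x1; y1; x2; y2; c] i.
pose a := [:: e c x1; e c y1; e c x2; e c y2].
pose ps := [:: odd (deg e W x1); odd (deg e W y1); odd (deg e W x2); odd (deg e W y2); odd (deg e W c)].
have hadj : forall i j, i < 5 -> j < 5 -> gadj (fun i => nth false a i) i j = e (vv i) (vv j).
  have E1' : e y1 x1 by rewrite sym.
  have E2' : e y2 x2 by rewrite sym.
  have N1' : e x2 x1 = false by rewrite sym; apply: negbTE.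
  have N2' : e y2 x1 = false by rewrite sym; apply: negbTE.
  have N3' : e x2 y1 = false by rewrite sym; apply: negbTE.
  have N4' : e y2 y1 = false by rewrite sym; apply: negbTE.
  move=> i j hi hj.
  case: i hi => [|[|[|[|[|i]]]]] hi //; case: j hj => [|[|[|[|[|j]]]]] hj //;
    by rewrite /gadj /= ?irr ?E1 ?E2 ?E1' ?E2' ?N1' ?N2' ?N3' ?N4' ?(negbTE N1) ?(negbTE N2) ?(negbTE N3) ?(negbTE N4) // sym.
have hinj : forall i j, i < 5 -> j < 5 -> vv i = vv j -> i = j.
  by move=> i j hi hj /eqP; rewrite /vv nth_uniq // => /eqP.
have hrem : forall i, i < 5 -> (vv i \in W) = (fun _ => true) i.
  by move=> i hi; case: i hi => [|[|[|[|[|i]]]]] hi //.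
have hpar : forall i, i < 5 -> (fun _ => true) i -> odd (deg e W (vv i)) = (fun i => nth false ps i) i.
  by move=> i hi _; case: i hi => [|[|[|[|[|i]]]]] hi //.
have := win_sound sym irr hadj hinj hrem hpar
  (gadget_win (e c x1) (e c y1) (e c x2) (e c y2) (odd (deg e W x1)) (odd (deg e W y1))
     (odd (deg e W x2)) (odd (deg e W y2)) (odd (deg e W c))).
case=> W' [h1 h2 h3]; exists W'; split=> //.
apply: (subset_trans h2); apply/subsetP=> x; rewrite inE => /existsP[[i hi] /eqP <-].
by case: i hi => [|[|[|[|[|i]]]]] hi //; rewrite !inE eqxx ?orbT.
Qed.

Definition o1 : 'I_2 := Ordinal (isT : 1 < 2).

Lemma stages (T : finType) (e : rel T) (R C : {set T}) (f : Fvert -> T) :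
  symmetric e -> irreflexive e -> injective f -> f @: [set: Fvert] = R ->
  (forall u v, e (f u) (f v) = Fedge u v) -> [disjoint C & R] ->
  forall (ts : seq T) (W : {set T}), size ts <= 3 -> uniq ts -> {subset ts <= C} ->
  {subset ts <= W} ->
  (forall j : 'I_5, j < size ts -> forall a b, f (a, (b, j)) \in W) ->
  exists W', [/\ reach e W W', W :\: W' \subset C :|: R & forall t, t \in ts -> t \notin W'].
Proof.
move=> sym irr finj fR hf dCR.
have notR : forall t, t \in C -> forall u, t != f u.
  move=> t tC u; apply/eqP=> htu; move: dCR; rewrite disjoint_subset => /subsetP/(_ t tC).
  by rewrite inE htu -fR imset_f.
have inR : forall u, f u \in R by move=> u; rewrite -fR imset_f.
elim=> [|t tl IH] W hs hu hC hW hg.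
  by exists W; split; [exact: reach_refl | rewrite setDv sub0set | ].
have hj : size tl < 5 by move: hs => /= ; lia.
pose j : 'I_5 := Ordinal hj.
have tC : t \in C by apply: hC; rewrite inE eqxx.
have hg0 : forall a b, f (a, (b, j)) \in W by move=> a b; apply: hg => /=.
have hun : uniq [:: f (ord0, (ord0, j)); f (ord0, (o1, j)); f (o1, (ord0, j)); f (o1, (o1, j)); t].
  by rewrite /= !inE !(inj_eq finj) /= !(eq_sym (f _)) !(notR _ tC).
have E1 : e (f (ord0, (ord0, j))) (f (ord0, (o1, j))) by rewrite hf.
have E2 : e (f (o1, (ord0, j))) (f (o1, (o1, j))) by rewrite hf.
have N1 : ~~ e (f (ord0, (ord0, j))) (f (o1, (ord0, j))) by rewrite hf.
have N2 : ~~ e (f (ord0, (ord0, j))) (f (o1, (o1, j))) by rewrite hf.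
have N3 : ~~ e (f (ord0, (o1, j))) (f (o1, (ord0, j))) by rewrite hf.
have N4 : ~~ e (f (ord0, (o1, j))) (f (o1, (o1, j))) by rewrite hf.
have [W1 [r1 s1 t1]] := gadget sym irr E1 E2 N1 N2 N3 N4 hun
  (And5 (hg0 ord0 ord0) (hg0 ord0 o1) (hg0 o1 ord0) (hg0 o1 o1) (hW t (mem_head _ _))).
have keep : forall x, x \in W -> x \notin [set f (ord0, (ord0, j)); f (ord0, (o1, j));
      f (o1, (ord0, j)); f (o1, (o1, j)); t] -> x \in W1.
  move=> x xW; apply: contraR => xW1; apply: (subsetP s1); by rewrite inE xW1 xW.
move: hu; rewrite cons_uniq => /andP[ttl hutl].
have hCtl : {subset tl <= C} by move=> s hs'; apply: hC; rewrite inE hs' orbT.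
have hWtl : {subset tl <= W1}.
  move=> s hs'; have sC := hCtl s hs'.
  have hst : (s == t) = false by apply/negbTE; apply: contraNneq ttl => <-.
  apply: keep; first by apply: hW; rewrite inE hs' orbT.
  by rewrite !inE !(negbTE (notR _ sC _)) hst.
have hgtl : forall j' : 'I_5, j' < size tl -> forall a b, f (a, (b, j')) \in W1.
  move=> j' hj' a b; apply: keep; first exact: hg (ltnW hj') a b.
  have hjj : (j' == j) = false by apply/negbTE; rewrite -val_eqE /= neq_ltn hj'.
  rewrite !inE !(inj_eq finj) !xpair_eqE hjj !andbF /=.
  by rewrite eq_sym (notR _ tC).
have [W2 [r2 s2 t2]] := IH W1 (ltnW hs) hutl hCtl hWtl hgtl.
- exists W2; split.
  + exact: reach_trans r1 r2.
  + apply/subsetP=> x; rewrite inE => /andP[xW2 xW].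
    case: (boolP (x \in W1)) => xW1.
      by apply: (subsetP s2); rewrite inE xW1 xW2.
    have : x \in W :\: W1 by rewrite inE xW xW1.
    move/(subsetP s1); rewrite !inE => /orP[/orP[/orP[/orP[]|]|]|] /eqP->;
      by rewrite ?inR ?tC ?orbT.
  + move=> t0; rewrite inE => /orP[/eqP->|ht]; last exact: t2.
    by apply: contra t1 => /(subsetP (reach_sub r2)).
Qed.
Unset Implicit Arguments.

Theorem mainTheorem8 (T : finType) (e : rel T) (R C : {set T}) :
  simple_graph e ->
  induced_iso_F e R ->
  [disjoint C & R] ->
  clique e C ->
  exists S : {set T},
    [/\ S \subset C :|: R,
        admissible e [set: T] S,
        clique e ((C :|: R) :\: S) &
        #|(C :|: R) :\: S| <= maxn #|C|.-1 2].
Proof.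
move=> [sym irr] [f [finj fR hf]] dCR cC.
pose ts := take 3 (enum C).
have hsz : size ts = minn 3 #|C| by rewrite size_take_min cardE.
have hts3 : size ts <= 3 by rewrite hsz geq_minl.
have hun : uniq ts by apply: take_uniq; apply: enum_uniq.
have hC : {subset ts <= C} by move=> x /mem_take; rewrite mem_enum.
have [W1 [r1 s1 t1]] := stages sym irr finj fR hf dCR hts3 hun hC
  (fun x _ => in_setT x) (fun _ _ _ _ => in_setT _).
have [W2 [r2 s2 c2]] := greedy (C :|: R) W1 sym irr.
have [S0 [hadm hW2]] := reach_trans r1 r2.
have hKe : (C :|: R) :\: S0 = (C :|: R) :&: W2 by rewrite hW2 setTD setDE.
exists S0; split=> //.
- apply/subsetP => x xS.
  have xW2 : x \notin W2 by rewrite hW2 !inE xS.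
  case: (boolP (x \in W1)) => xW1.
    by apply: (subsetP s2); rewrite inE xW1 xW2.
  by apply: (subsetP s1); rewrite !inE xW1.
- by rewrite hKe.
rewrite hKe; set K := (C :|: R) :&: W2.
have hKC : #|K :&: C| <= #|C| - size ts.
  have -> : #|C| - size ts = #|C :\: [set x in ts]|.
    rewrite cardsD (setIidPr _); last by apply/subsetP=> x; rewrite inE => /hC.
    by rewrite cardsE (card_uniqP hun).
  apply: subset_leq_card; apply/subsetP=> x; rewrite !inE => /andP[/andP[_ xW2] xC].
  rewrite xC andbT; apply/negP=> xt; move: (t1 x xt).
  by rewrite (subsetP (reach_sub r2)).
have hKR : #|K :&: R| <= 2.
  pose g := fun x => if [pick u | f u == x] is Some u then u.2.1 else (ord0 : 'I_2).
  have gE : forall u, g (f u) = u.2.1.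
    move=> u; rewrite /g; case: pickP => [v /eqP /finj -> // | /(_ u)]; by rewrite eqxx.
  have hinR : forall x, x \in R -> exists u, x = f u.
    by move=> x; rewrite -fR => /imsetP[u _ ->]; exists u.
  rewrite -(card_in_imset (f := g)); first by apply: leq_trans (max_card _) _; rewrite card_ord.
  move=> x y /setIP[xK xR] /setIP[yK yR].
  case: (hinR x xR) => u hu; case: (hinR y yR) => v hv; subst x y.
  rewrite !gE => huv; case: (f u =P f v) => // /eqP hne.
  by move: (c2 _ _ xK yK hne); rewrite hf /Fedge huv eqxx andbF.
have hK : #|K| <= #|K :&: C| + #|K :&: R|.
  have hKU : K = (K :&: C) :|: (K :&: R).
    by rewrite -setIUr; apply/esym/setIidPl; apply: subsetIl.
  rewrite {1}hKU cardsU; lia.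
rewrite hsz in hKC; lia.
Qed.
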